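(* Consider the two equations \[ \text{(A)}\quad \partial_{tt}u-\partial_{xx}u=(\partial_t u)^2, \qquad \text{(B)}\quad \partial_{tt}u-\partial_{xx}u=(\partial_t u)^2-(\partial_x u)^2 , \] for $u=u(t,x)$ real-valued, $x\in\mathbb{R}$. For $T>0$, $x_0\in\mathbb{R}$ let $\Gamma(T,x_0):=\{(t,x)\in[0,T)\times\mathbb{R}: |x-x_0|\le T-t\}$. \begin{enumerate} \item For any $T>0$ and $x_0\in\mathbb{R}$, neither (A) nor (B) admits a smooth exact self-similar blow-up solution in $\Gamma(T,x_0)$, i.e. there is no non-constant $U\in C^\infty([-1,1])$ such that $u(t,x)=U\big(\frac{x-x_0}{T-t}\big)$ solves (A), respectively (B), in $\Gamma(T,x_0)$. \item For all $T>0$ and $\kappa,x_0\in\mathbb{R}$, the functions \[ u_{\alpha,\beta,\kappa,T,x_0}(t,x)=-\alpha\log\Big(1-\frac{t}{T}\Big)+U_{\alpha,\beta}\Big(\frac{x-x_0}{T-t}\Big)+\kappa \] are smooth solutions, well defined in $\Gamma(T,x_0)$, which blow up at time $T$, where: for (A), $(\alpha,\beta)\in(0,1]\times\{0,\infty\}$ and \[ U_{\alpha,0}(y)=-\alpha\ln(1-\sqrt{1-\alpha}\,y),\qquad U_{\alpha,\infty}(y)=-\alpha\ln(1+\sqrt{1-\alpha}\,y); \] for (B), $(\alpha,\beta)\in\mathbb{Z}_+\times\mathbb{R}_+$ (with $\mathbb{R}_+=(0,\infty)$) and \[ U_{\alpha,\beta}(y)=-\log\big((1+y)^\alpha+\beta(1-y)^\alpha\big)+\log(1+\beta).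 \] This gives a five-parameter family $(\alpha,\beta,\kappa,T,x_0)$ of smooth generalized self-similar blow-up solutions with logarithmic growth. \end{enumerate}
   Context: A (exact) self-similar solution is one of the form $u(t,x)=U(y)$ with $y=\frac{x-x_0}{T-t}$; the backward light cone $|x-x_0|\le T-t$ corresponds to $|y|\le 1$. *)

(* Defs.v *)
From Stdlib Require Import Reals Lra List.
From Coquelicot Require Import Coquelicot.
Open Scope R_scope.

Definition cone (T x0 t x : R) : Prop := 0 <= t < T /\ Rabs (x - x0) <= T - t.

Definition cone_open (T x0 t x : R) : Prop := 0 <= t < T /\ Rabs (x - x0) < T - t.

Definition d_t (u : R -> R -> R) (t x : R) : R := Derive (fun s => u s x) t.
Definition d_x (u : R -> R -> R) (t x : R) : R := Derive (fun y => u t y) x.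

Definition solves_A (u : R -> R -> R) (D : R -> R -> Prop) : Prop :=
  forall t x, D t x ->
    d_t (d_t u) t x - d_x (d_x u) t x = (d_t u t x) ^ 2.

Definition solves_B (u : R -> R -> R) (D : R -> R -> Prop) : Prop :=
  forall t x, D t x ->
    d_t (d_t u) t x - d_x (d_x u) t x = (d_t u t x) ^ 2 - (d_x u t x) ^ 2.

(* U in C^infty([a,b]): all derivatives exist on (a,b) and extend
   continuously to [a,b]; U itself is continuous on [a,b]. *)
Definition smooth_closed (U : R -> R) (a b : R) : Prop :=
  (forall y, a <= y <= b ->
     filterlim U (within (fun z => a <= z <= b) (locally y)) (locally (U y))) /\
  forall n : nat,
    (forall y, a < y < b -> ex_derive_n U n y) /\
    (forall y, a <= y <= b -> exists l : R,
       filterlim (Derive_n U n) (within (fun z => a < z < b) (locally y)) (locally l)).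

Definition nonconstant_on (U : R -> R) (a b : R) : Prop :=
  exists y1 y2, a <= y1 <= b /\ a <= y2 <= b /\ U y1 <> U y2.

Definition selfsim (U : R -> R) (T x0 : R) : R -> R -> R :=
  fun t x => U ((x - x0) / (T - t)).

(* Iterated partial derivatives: true = d/dt, false = d/dx (applied right to left). *)
Fixpoint iter_partial (ds : list bool) (u : R -> R -> R) : R -> R -> R :=
  match ds with
  | nil => u
  | d :: ds' =>
      let v := iter_partial ds' u in
      if d then d_t v else d_x v
  end.

Definition smooth_near (u : R -> R -> R) (t x : R) : Prop :=
  exists eps : R, 0 < eps /\
    forall t' x', Rabs (t' - t) < eps -> Rabs (x' - x) < eps ->
      forall ds : list bool,
        ex_derive (fun s => iter_partial ds u s x') t' /\
        ex_derive (fun y => iter_partial ds u t' y) x' /\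
        continuous (fun p : R * R => iter_partial ds u (fst p) (snd p)) (t', x').

Definition smooth_on (u : R -> R -> R) (D : R -> R -> Prop) : Prop :=
  forall t x, D t x -> smooth_near u t x.

Definition blows_up_at (u : R -> R -> R) (T x0 : R) : Prop :=
  forall M : R, exists delta : R, 0 < delta /\
    forall t, T - delta < t < T ->
      exists x, Rabs (x - x0) <= T - t /\ M < Rabs (u t x).

Inductive betaA := Beta0 | BetaInf.

Definition argA (b : betaA) (alpha y : R) : R :=
  match b with
  | Beta0 => 1 - sqrt (1 - alpha) * y
  | BetaInf => 1 + sqrt (1 - alpha) * y
  end.

Definition UA (b : betaA) (alpha y : R) : R := - alpha * ln (argA b alpha y).

Definition argB (alpha : nat) (beta y : R) : R :=
  (1 + y) ^ alpha + beta * (1 - y) ^ alpha.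

Definition UB (alpha : nat) (beta y : R) : R := - ln (argB alpha beta y) + ln (1 + beta).

Definition uA (b : betaA) (alpha kappa T x0 : R) : R -> R -> R :=
  fun t x => - alpha * ln (1 - t / T) + UA b alpha ((x - x0) / (T - t)) + kappa.

Definition uB (alpha : nat) (beta kappa T x0 : R) : R -> R -> R :=
  fun t x => - INR alpha * ln (1 - t / T) + UB alpha beta ((x - x0) / (T - t)) + kappa.

(* Main.v *)
Require Import Defs.
From Stdlib Require Import Reals Lra Lia List Classical.
From Coquelicot Require Import Coquelicot.
Open Scope R_scope.

Inductive ex := Cst (r : R) | Vt | Vx | Add (a b : ex) | Mul (a b : ex)
  | Opp (a : ex) | Inv (a : ex) | Ln (a : ex) | Pw (a : ex) (n : nat).

Fixpoint ev (e : ex) (t x : R) : R :=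
  match e with
  | Cst r => r | Vt => t | Vx => x
  | Add a b => ev a t x + ev b t x
  | Mul a b => ev a t x * ev b t x
  | Opp a => - ev a t x
  | Inv a => / ev a t x
  | Ln a => ln (ev a t x)
  | Pw a n => ev a t x ^ n
  end.

Fixpoint wd (e : ex) (t x : R) : Prop :=
  match e with
  | Cst _ | Vt | Vx => True
  | Add a b | Mul a b => wd a t x /\ wd b t x
  | Opp a | Pw a _ => wd a t x
  | Inv a => wd a t x /\ ev a t x <> 0
  | Ln a => wd a t x /\ 0 < ev a t x
  end.

Fixpoint dv (b : bool) (e : ex) : ex :=
  match e with
  | Cst _ => Cst 0
  | Vt => Cst (if b then 1 else 0)
  | Vx => Cst (if b then 0 else 1)
  | Add a c => Add (dv b a) (dv b c)
  | Mul a c => Add (Mul (dv b a) c) (Mul a (dv b c))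
  | Opp a => Opp (dv b a)
  | Inv a => Opp (Mul (dv b a) (Inv (Mul a a)))
  | Ln a => Mul (dv b a) (Inv a)
  | Pw a n => Mul (Cst (INR n)) (Mul (Pw a (pred n)) (dv b a))
  end.

Lemma wd_dv b e t x : wd e t x -> wd (dv b e) t x.
Proof.
  induction e; simpl; intros W; intuition;
  try (apply Rmult_integral_contrapositive_currified; auto); try lra.
  apply Rmult_integral in H2; tauto.
Qed.

Lemma isd_eq (f : R -> R) (x l l' : R) : is_derive f x l -> l = l' -> is_derive f x l'.
Proof. intros H ->; exact H. Qed.

Lemma dv_t e t x : wd e t x -> is_derive (fun s => ev e s x) t (ev (dv true e) t x).
Proof.
  induction e; simpl; intros W.
  - apply (isd_eq _ _ _ _ (is_derive_const r t)). reflexivity.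
  - apply (isd_eq _ _ _ _ (is_derive_id t)). reflexivity.
  - apply (isd_eq _ _ _ _ (is_derive_const x t)). reflexivity.
  - destruct W. apply (isd_eq _ _ _ _ (is_derive_plus _ _ _ _ _ (IHe1 H) (IHe2 H0))). reflexivity.
  - destruct W. apply (isd_eq _ _ _ _ (is_derive_mult _ _ _ _ _ (IHe1 H) (IHe2 H0) Rmult_comm)). reflexivity.
  - apply (isd_eq _ _ _ _ (is_derive_opp _ _ _ (IHe W))). reflexivity.
  - destruct W. apply (isd_eq _ _ _ _ (is_derive_inv _ _ _ (IHe H) H0)). field. auto.
  - destruct W. apply (isd_eq (fun s => ln (ev e s x)) t _ _ (is_derive_comp ln (fun s => ev e s x) t _ _ (proj2 (is_derive_Reals _ _ _) (derivable_pt_lim_ln _ H0)) (IHe H))).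
    change (ev (dv true e) t x * / ev e t x = ev (dv true e) t x * / ev e t x). reflexivity.
  - apply (isd_eq _ _ _ _ (is_derive_pow _ n _ _ (IHe W))). ring.
Qed.

Lemma dv_x e t x : wd e t x -> is_derive (fun s => ev e t s) x (ev (dv false e) t x).
Proof.
  induction e; simpl; intros W.
  - apply (isd_eq _ _ _ _ (is_derive_const r x)). reflexivity.
  - apply (isd_eq _ _ _ _ (is_derive_const t x)). reflexivity.
  - apply (isd_eq _ _ _ _ (is_derive_id x)). reflexivity.
  - destruct W. apply (isd_eq _ _ _ _ (is_derive_plus _ _ _ _ _ (IHe1 H) (IHe2 H0))). reflexivity.
  - destruct W. apply (isd_eq _ _ _ _ (is_derive_mult _ _ _ _ _ (IHe1 H) (IHe2 H0) Rmult_comm)). reflexivity.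
  - apply (isd_eq _ _ _ _ (is_derive_opp _ _ _ (IHe W))). reflexivity.
  - destruct W. apply (isd_eq _ _ _ _ (is_derive_inv _ _ _ (IHe H) H0)). field. auto.
  - destruct W. apply (isd_eq (fun s => ln (ev e t s)) x _ _ (is_derive_comp ln (fun s => ev e t s) x _ _ (proj2 (is_derive_Reals _ _ _) (derivable_pt_lim_ln _ H0)) (IHe H))).
    change (ev (dv false e) t x * / ev e t x = ev (dv false e) t x * / ev e t x). reflexivity.
  - apply (isd_eq _ _ _ _ (is_derive_pow _ n _ _ (IHe W))). ring.
Qed.

Lemma ev_cont e t x : wd e t x -> continuous (fun p : R * R => ev e (fst p) (snd p)) (t, x).
Proof.
  induction e; simpl; intros W.
  - apply continuous_const.
  - apply continuous_fst.
  - apply continuous_snd.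
  - destruct W. apply (continuous_plus _ _ _ (IHe1 H) (IHe2 H0)).
  - destruct W. apply (continuous_mult _ _ _ (IHe1 H) (IHe2 H0)).
  - apply (continuous_opp _ _ (IHe W)).
  - destruct W. apply (continuous_comp _ (fun r => / r)). apply IHe; auto. apply continuous_Rinv. auto.
  - destruct W. apply (continuous_comp _ ln). apply IHe; auto. apply continuous_ln. auto.
  - specialize (IHe W). induction n; simpl.
    + apply continuous_const.
    + apply (continuous_mult _ _ _ IHe IHn).
Qed.

Lemma cont_loc (f : R * R -> R) p (P : R -> Prop) :
  continuous f p -> open P -> P (f p) -> locally p (fun q => P (f q)).
Proof.
  intros Hc Ho Hp. apply Hc. apply Ho. exact Hp.
Qed.

Lemma wd_open e t x : wd e t x -> locally (t, x) (fun p => wd e (fst p) (snd p)).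
Proof.
  induction e; simpl; intros W.
  - apply filter_true.
  - apply filter_true.
  - apply filter_true.
  - destruct W. apply filter_and; auto.
  - destruct W. apply filter_and; auto.
  - auto.
  - destruct W. apply filter_and; auto.
    apply (cont_loc (fun p => ev e (fst p) (snd p)) (t,x) (fun r => r <> 0)).
    apply ev_cont; auto. apply open_neq. auto.
  - destruct W. apply filter_and; auto.
    apply (cont_loc (fun p => ev e (fst p) (snd p)) (t,x) (fun r => 0 < r)).
    apply ev_cont; auto. apply open_gt. auto.
  - auto.
Qed.

Lemma loc_box (P : R * R -> Prop) t x : locally (t, x) P ->
  exists eps, 0 < eps /\ forall t' x', Rabs (t' - t) < eps -> Rabs (x' - x) < eps -> P (t', x').
Proof.
  intros [eps H]. exists eps. split. apply cond_pos.
  intros t' x' H1 H2. apply H. split; assumption.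
Qed.

Lemma loc_slice_t (P : R * R -> Prop) t x : locally (t, x) P -> locally t (fun s => P (s, x)).
Proof.
  intros [eps H]. exists eps. intros s Hs. apply H. split. exact Hs. apply ball_center.
Qed.

Lemma loc_slice_x (P : R * R -> Prop) t x : locally (t, x) P -> locally x (fun s => P (t, s)).
Proof.
  intros [eps H]. exists eps. intros s Hs. apply H. split. apply ball_center. exact Hs.
Qed.

Fixpoint Dl (ds : list bool) (e : ex) : ex :=
  match ds with nil => e | d :: ds' => dv d (Dl ds' e) end.

Lemma wd_Dl ds e t x : wd e t x -> wd (Dl ds e) t x.
Proof. induction ds; simpl; auto. intros; apply wd_dv; auto. Qed.

Lemma iter_eq (u : R -> R -> R) e : (forall t x, u t x = ev e t x) ->
  forall ds t x, wd e t x -> iter_partial ds u t x = ev (Dl ds e) t x.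
Proof.
  intros Hu ds. induction ds as [|d ds IH]; simpl; intros t x W.
  - apply Hu.
  - destruct d.
    + unfold d_t. rewrite (Derive_ext_loc _ (fun s => ev (Dl ds e) s x)).
      * apply is_derive_unique. apply dv_t. apply wd_Dl; auto.
      * apply (filter_imp (fun s => wd e (fst (s, x)) (snd (s, x)))).
        intros s Hs. apply IH. exact Hs.
        apply (loc_slice_t (fun p => wd e (fst p) (snd p))). apply wd_open; auto.
    + unfold d_x. rewrite (Derive_ext_loc _ (fun s => ev (Dl ds e) t s)).
      * apply is_derive_unique. apply dv_x. apply wd_Dl; auto.
      * apply (filter_imp (fun s => wd e (fst (t, s)) (snd (t, s)))).
        intros s Hs. apply IH. exact Hs.
        apply (loc_slice_x (fun p => wd e (fst p) (snd p))). apply wd_open; auto.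
Qed.

Lemma smooth_from_ev (u : R -> R -> R) e t x : (forall t x, u t x = ev e t x) ->
  wd e t x -> smooth_near u t x.
Proof.
  intros Hu W. destruct (loc_box _ _ _ (wd_open e t x W)) as [eps [Heps Hb]].
  exists eps. split; auto. intros t' x' H1 H2 ds.
  specialize (Hb t' x' H1 H2). simpl in Hb.
  pose proof (wd_open e t' x' Hb) as L.
  split; [|split].
  - apply (ex_derive_ext_loc (fun s => ev (Dl ds e) s x')).
    + apply (filter_imp (fun s => wd e (fst (s, x')) (snd (s, x')))).
      intros s Hs. symmetry. apply iter_eq; auto.
      apply (loc_slice_t (fun p => wd e (fst p) (snd p))). exact L.
    + eexists. apply dv_t. apply wd_Dl; auto.
  - apply (ex_derive_ext_loc (fun s => ev (Dl ds e) t' s)).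
    + apply (filter_imp (fun s => wd e (fst (t', s)) (snd (t', s)))).
      intros s Hs. symmetry. apply iter_eq; auto.
      apply (loc_slice_x (fun p => wd e (fst p) (snd p))). exact L.
    + eexists. apply dv_x. apply wd_Dl; auto.
  - apply (continuous_ext_loc _ (fun p : R * R => ev (Dl ds e) (fst p) (snd p))).
      2: apply ev_cont; apply wd_Dl; auto.
    + apply (filter_imp (fun p : R * R => wd e (fst p) (snd p))).
      intros [s z] Hs. simpl. symmetry. apply iter_eq; auto. exact L.

Qed.

Definition Ye (T x0 : R) := Mul (Add Vx (Opp (Cst x0))) (Inv (Add (Cst T) (Opp Vt))).
Definition argAe (b : betaA) (alpha T x0 : R) :=
  match b with
  | Beta0 => Add (Cst 1) (Opp (Mul (Cst (sqrt (1 - alpha))) (Ye T x0)))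
  | BetaInf => Add (Cst 1) (Mul (Cst (sqrt (1 - alpha))) (Ye T x0))
  end.
Definition eA b alpha kappa T x0 :=
  Add (Add (Mul (Opp (Cst alpha)) (Ln (Add (Cst 1) (Opp (Mul Vt (Inv (Cst T)))))))
           (Mul (Opp (Cst alpha)) (Ln (argAe b alpha T x0)))) (Cst kappa).

Lemma uA_ev b alpha kappa T x0 t x : uA b alpha kappa T x0 t x = ev (eA b alpha kappa T x0) t x.
Proof. destruct b; reflexivity. Qed.

Lemma cone_y T x0 t x : cone T x0 t x -> 0 < T - t /\ Rabs ((x - x0) / (T - t)) <= 1.
Proof.
  intros [[H1 H2] H3]. split. lra.
  unfold Rdiv. rewrite Rabs_mult, Rabs_inv, (Rabs_pos_eq (T - t)) by lra.
  apply (Rmult_le_reg_r (T - t)). lra. rewrite Rmult_assoc, Rinv_l by lra. lra.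
Qed.

Lemma argA_pos b alpha T x0 t x : 0 < alpha <= 1 -> cone T x0 t x ->
  0 < argA b alpha ((x - x0) / (T - t)).
Proof.
  intros Ha Hc. destruct (cone_y _ _ _ _ Hc) as [_ Hy].
  set (y := (x - x0) / (T - t)) in *.
  assert (Hs : 0 <= sqrt (1 - alpha) < 1).
  { split. apply sqrt_pos. assert (sqrt (1-alpha) < sqrt 1) by (apply sqrt_lt_1_alt; lra).
    rewrite sqrt_1 in H; lra. }
  assert (Rabs (sqrt (1 - alpha) * y) < 1).
  { rewrite Rabs_mult, Rabs_pos_eq by lra. 
    apply Rle_lt_trans with (sqrt (1 - alpha) * 1). apply Rmult_le_compat_l; lra. lra. }
  apply Rabs_def2 in H.
  destruct b; simpl; lra.
Qed.

Lemma wd_eA b alpha kappa T x0 t x : 0 < alpha <= 1 -> 0 < T -> cone T x0 t x ->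
  wd (eA b alpha kappa T x0) t x.
Proof.
  intros Ha HT Hc. pose proof (argA_pos b alpha T x0 t x Ha Hc) as Hp.
  destruct Hc as [[H1 H2] H3].
  assert (0 < 1 - t / T).
  { apply Rlt_Rminus. apply (Rmult_lt_reg_r T); auto. unfold Rdiv. rewrite Rmult_assoc, Rinv_l; lra. }
  destruct b; simpl in *; unfold Rminus, Rdiv in *; repeat split; auto; lra.
Qed.

Lemma hlp1 T t x x0 c : 0 < T + - t -> 0 < 1 + - (c * ((x + - x0) * / (T + - t))) ->
  T + - t + - (c * (x + - x0)) <> 0.
Proof.
  intros H1 H2. assert (0 < (T + - t) * (1 + - (c * ((x + - x0) * / (T + - t))))) by (apply Rmult_lt_0_compat; lra).
  replace ((T + - t) * (1 + - (c * ((x + - x0) * / (T + - t))))) with (T + - t + - (c * (x + - x0))) in H by (field; lra). lra.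
Qed.
Lemma hlp2 T t x x0 c : 0 < T + - t -> 0 < 1 + (c * ((x + - x0) * / (T + - t))) ->
  T + - t + (c * (x + - x0)) <> 0.
Proof.
  intros H1 H2. assert (0 < (T + - t) * (1 + (c * ((x + - x0) * / (T + - t))))) by (apply Rmult_lt_0_compat; lra).
  replace ((T + - t) * (1 + (c * ((x + - x0) * / (T + - t))))) with (T + - t + (c * (x + - x0))) in H by (field; lra). lra.
Qed.

Lemma solA b alpha kappa T x0 : 0 < alpha <= 1 -> 0 < T ->
  solves_A (uA b alpha kappa T x0) (cone T x0).
Proof.
  intros Ha HT t x Hc.
  pose proof (wd_eA b alpha kappa T x0 t x Ha HT Hc) as W.
  pose proof (argA_pos b alpha T x0 t x Ha Hc) as Hp.
  destruct Hc as [[H1 H2] H3].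
  change (iter_partial (true :: true :: nil) (uA b alpha kappa T x0) t x -
          iter_partial (false :: false :: nil) (uA b alpha kappa T x0) t x =
          (iter_partial (true :: nil) (uA b alpha kappa T x0) t x) ^ 2).
  rewrite !(iter_eq _ _ (uA_ev b alpha kappa T x0)) by exact W.
  assert (Hs : sqrt (1 - alpha) * sqrt (1 - alpha) = 1 - alpha) by (apply sqrt_sqrt; lra).
  destruct b; simpl in *; set (c := sqrt (1 - alpha)) in *; clearbody c;
  replace alpha with (1 - c * c) by lra; unfold Rminus, Rdiv in *;
  field; repeat split; try lra; [apply hlp1 | apply hlp2]; lra.
Qed.

Lemma blow_gen a kappa T M : 0 < a -> 0 < T ->
  exists delta, 0 < delta /\ forall t, T - delta < t < T -> M < Rabs (- a * ln (1 - t / T) + kappa).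
Proof.
  intros Ha HT. set (K := (Rabs M + Rabs kappa) / a).
  assert (HK : 0 <= K) by (unfold K; apply Rmult_le_pos; [pose proof (Rabs_pos M); pose proof (Rabs_pos kappa); lra | left; apply Rinv_0_lt_compat; lra]).
  exists (T * exp (- K)). split. apply Rmult_lt_0_compat; auto; apply exp_pos.
  intros t Ht.
  assert (Hq : 0 < 1 - t / T < exp (- K)).
  { split.
    - apply (Rmult_lt_reg_r T); auto. unfold Rdiv. rewrite Rmult_minus_distr_r, Rmult_assoc, Rinv_l; lra.
    - apply (Rmult_lt_reg_r T); auto. unfold Rdiv. rewrite Rmult_minus_distr_r, Rmult_assoc, Rinv_l by lra. lra. }
  assert (Hl : ln (1 - t / T) < - K).
  { rewrite <- (ln_exp (- K)). apply ln_increasing; lra. }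
  assert (a * K = Rabs M + Rabs kappa) by (unfold K; field; lra).
  assert (- a * ln (1 - t / T) > a * K) by nra.
  pose proof (Rabs_pos M). pose proof (Rle_abs M). pose proof (Rabs_pos kappa). pose proof (Rle_abs (- kappa)). rewrite Rabs_Ropp in *.
  rewrite Rabs_pos_eq; lra.
Qed.

Lemma partA b alpha kappa T x0 : 0 < alpha <= 1 -> 0 < T ->
     (forall t x, cone T x0 t x -> 0 < argA b alpha ((x - x0) / (T - t))) /\
     smooth_on (uA b alpha kappa T x0) (cone T x0) /\
     solves_A (uA b alpha kappa T x0) (cone T x0) /\
     blows_up_at (uA b alpha kappa T x0) T x0.
Proof.
  intros Ha HT. split; [|split; [|split]].
  - intros; apply argA_pos; auto.
  - intros t x Hc. apply (smooth_from_ev _ (eA b alpha kappa T x0)). apply uA_ev. apply wd_eA; auto.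
  - apply solA; auto.
  - intros M. destruct (blow_gen alpha kappa T M (proj1 Ha) HT) as [d [Hd H]].
    exists (Rmin d T). split. apply Rmin_pos; lra.
    intros t Ht. exists x0. split.
    + rewrite Rminus_diag, Rabs_R0. pose proof (Rmin_r d T). lra.
    + pose proof (Rmin_l d T). replace (uA b alpha kappa T x0 t x0) with (- alpha * ln (1 - t / T) + kappa).
      apply H; lra.
      unfold uA, UA. rewrite Rminus_diag. replace (0 / (T - t)) with 0 by (unfold Rdiv; ring).
      replace (argA b alpha 0) with 1 by (destruct b; simpl; ring). rewrite ln_1. ring.
Qed.

Definition argBe (n : nat) (beta T x0 : R) :=
  Add (Pw (Add (Cst 1) (Ye T x0)) n) (Mul (Cst beta) (Pw (Add (Cst 1) (Opp (Ye T x0))) n)).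
Definition eB n beta kappa T x0 :=
  Add (Add (Mul (Opp (Cst (INR n))) (Ln (Add (Cst 1) (Opp (Mul Vt (Inv (Cst T)))))))
           (Add (Opp (Ln (argBe n beta T x0))) (Cst (ln (1 + beta))))) (Cst kappa).

Lemma uB_ev n beta kappa T x0 t x : uB n beta kappa T x0 t x = ev (eB n beta kappa T x0) t x.
Proof. reflexivity. Qed.

Lemma argB_pos n beta T x0 t x : (1 <= n)%nat -> 0 < beta -> cone T x0 t x ->
  0 < argB n beta ((x - x0) / (T - t)).
Proof.
  intros Hn Hb Hc. destruct (cone_y _ _ _ _ Hc) as [_ Hy].
  set (y := (x - x0) / (T - t)) in *. apply Rabs_le_between in Hy. unfold argB.
  destruct (Rle_lt_dec (1 + y) 0).
  - assert (y = -1) by lra. subst y. rewrite H.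
    assert (0 < beta * (1 - -1) ^ n) by (apply Rmult_lt_0_compat; auto; apply pow_lt; lra).
    assert (0 <= (1 + -1) ^ n) by (apply pow_le; lra). lra.
  - assert (0 < (1 + y) ^ n) by (apply pow_lt; lra).
    assert (0 <= beta * (1 - y) ^ n) by (apply Rmult_le_pos; [lra | apply pow_le; lra]). lra.
Qed.

Lemma wd_eB n beta kappa T x0 t x : (1 <= n)%nat -> 0 < beta -> 0 < T -> cone T x0 t x ->
  wd (eB n beta kappa T x0) t x.
Proof.
  intros Hn Hb HT Hc. pose proof (argB_pos n beta T x0 t x Hn Hb Hc) as Hp.
  destruct Hc as [[H1 H2] H3].
  assert (0 < 1 - t / T).
  { apply Rlt_Rminus. apply (Rmult_lt_reg_r T); auto. unfold Rdiv. rewrite Rmult_assoc, Rinv_l; lra. }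
  unfold argB in Hp. simpl in *; unfold Rminus, Rdiv in *; repeat split; auto; lra.
Qed.

Lemma solB n beta kappa T x0 : (1 <= n)%nat -> 0 < beta -> 0 < T ->
  solves_B (uB n beta kappa T x0) (cone T x0).
Proof.
  intros Hn Hb HT t x Hc.
  pose proof (wd_eB n beta kappa T x0 t x Hn Hb HT Hc) as W.
  pose proof (argB_pos n beta T x0 t x Hn Hb Hc) as Hp.
  destruct Hc as [[H1 H2] H3].
  change (iter_partial (true :: true :: nil) (uB n beta kappa T x0) t x -
          iter_partial (false :: false :: nil) (uB n beta kappa T x0) t x =
          (iter_partial (true :: nil) (uB n beta kappa T x0) t x) ^ 2 -
          (iter_partial (false :: nil) (uB n beta kappa T x0) t x) ^ 2).
  rewrite !(iter_eq _ _ (uB_ev n beta kappa T x0)) by exact W.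
  clear W. unfold argB in Hp.
  destruct n as [|[|m]]; [lia | |]; simpl in *; unfold Rminus, Rdiv in *;
  set (y := (x + - x0) * / (T + - t)) in *;
  (assert (Hx : x = x0 + y * (T + - t)) by (unfold y; field; lra));
  clearbody y; subst x.
  - field. repeat split; lra.
  - rewrite ?S_INR. field. repeat split; lra.
Qed.

Lemma partB n beta kappa T x0 : (1 <= n)%nat -> 0 < beta -> 0 < T ->
     (forall t x, cone T x0 t x -> 0 < argB n beta ((x - x0) / (T - t))) /\
     smooth_on (uB n beta kappa T x0) (cone T x0) /\
     solves_B (uB n beta kappa T x0) (cone T x0) /\
     blows_up_at (uB n beta kappa T x0) T x0.
Proof.
  intros Hn Hb HT. split; [|split; [|split]].
  - intros; apply argB_pos; auto.
  - intros t x Hc. apply (smooth_from_ev _ (eB n beta kappa T x0)). apply uB_ev. apply wd_eB; auto.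
  - apply solB; auto.
  - intros M. assert (Hn' : 0 < INR n) by (apply lt_0_INR; lia).
    destruct (blow_gen (INR n) kappa T M Hn' HT) as [d [Hd H]].
    exists (Rmin d T). split. apply Rmin_pos; lra.
    intros t Ht. exists x0. split.
    + rewrite Rminus_diag, Rabs_R0. pose proof (Rmin_r d T). lra.
    + pose proof (Rmin_l d T). replace (uB n beta kappa T x0 t x0) with (- INR n * ln (1 - t / T) + kappa).
      apply H; lra.
      unfold uB, UB, argB. rewrite Rminus_diag. replace (0 / (T - t)) with 0 by (unfold Rdiv; ring).
      rewrite Rplus_0_r, Rminus_0_r, pow1, Rmult_1_r. ring.
Qed.
Lemma open_int : open (fun r : R => -1 < r < 1).
Proof. apply open_and. apply open_gt. apply open_lt. Qed.

Lemma loc_comp (f : R -> R) s0 (P : R -> Prop) : ex_derive f s0 -> open P -> P (f s0) -> locally s0 (fun s => P (f s)).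
Proof. intros Hd Ho Hp. apply (ex_derive_continuous f s0 Hd). apply Ho. exact Hp. Qed.

Section S.
Variable U : R -> R.
Variables T x0 : R.
Hypothesis HT : 0 < T.
Hypothesis H1 : forall z, -1 < z < 1 -> ex_derive U z.
Hypothesis H2 : forall z, -1 < z < 1 -> ex_derive (Derive U) z.

Lemma dt1 s z : T - s <> 0 -> -1 < (z - x0) / (T - s) < 1 ->
  d_t (selfsim U T x0) s z = Derive U ((z - x0) / (T - s)) * ((z - x0) / (T - s) ^ 2).
Proof.
  intros Hs Hz. unfold d_t, selfsim. apply is_derive_unique. auto_derive.
  - repeat split; try exact Hs; apply H1; exact Hz.
  - unfold Rminus, Rdiv in *; change (fun x : R => U x) with U.
    field. exact Hs.
Qed.

Lemma dx1 s z : T - s <> 0 -> -1 < (z - x0) / (T - s) < 1 ->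
  d_x (selfsim U T x0) s z = Derive U ((z - x0) / (T - s)) / (T - s).
Proof.
  intros Hs Hz. unfold d_x, selfsim. apply is_derive_unique. auto_derive.
  - repeat split; try exact Hs; apply H1; exact Hz.
  - unfold Rminus, Rdiv in *; change (fun x : R => U x) with U.
    field. exact Hs.
Qed.

Lemma derivs y : -1 < y < 1 ->
  d_t (selfsim U T x0) 0 (x0 + T * y) = Derive U y * y / T /\
  d_x (selfsim U T x0) 0 (x0 + T * y) = Derive U y / T /\
  d_t (d_t (selfsim U T x0)) 0 (x0 + T * y) = (Derive (Derive U) y * y ^ 2 + 2 * y * Derive U y) / T ^ 2 /\
  d_x (d_x (selfsim U T x0)) 0 (x0 + T * y) = Derive (Derive U) y / T ^ 2.
Proof.
  intros Hy.
  assert (Ey : (x0 + T * y - x0) / (T - 0) = y) by (field; lra).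
  assert (HT0 : T - 0 <> 0) by lra.
  split; [|split; [|split]].
  - rewrite (dt1 0 (x0 + T * y)) by (rewrite ?Ey; auto). rewrite Ey. field. lra.
  - rewrite (dx1 0 (x0 + T * y)) by (rewrite ?Ey; auto). rewrite Ey, Rminus_0_r. reflexivity.
  - unfold d_t at 1.
    rewrite (Derive_ext_loc _ (fun s => Derive U ((x0 + T * y - x0) / (T - s)) * ((x0 + T * y - x0) / (T - s) ^ 2))).
    + apply is_derive_unique. auto_derive.
      * repeat split; try lra; try (repeat apply Rmult_integral_contrapositive_currified; lra);
        (change (ex_derive (Derive U) ((x0 + T * y - x0) / (T - 0))); rewrite Ey; apply H2; auto).
      * unfold Rminus, Rdiv in *; change (fun x : R => U x) with U; change (fun x : R => Derive U x) with (Derive U).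
        rewrite Ey. field. lra.
    + assert (L1 : locally 0 (fun s => (fun r => r <> 0) (T - s))).
      { apply (loc_comp (fun s => T - s) 0 (fun r => r <> 0)). auto_derive; auto. apply open_neq. exact HT0. }
      assert (L2 : locally 0 (fun s => (fun r => -1 < r < 1) ((x0 + T * y - x0) / (T - s)))).
      { apply (loc_comp (fun s => (x0 + T * y - x0) / (T - s)) 0 (fun r => -1 < r < 1)). auto_derive; auto. apply open_int. rewrite Ey; exact Hy. }
      apply (filter_imp _ _ (fun s H => dt1 s (x0 + T * y) (proj1 H) (proj2 H)) (filter_and _ _ L1 L2)).
  - unfold d_x at 1.
    rewrite (Derive_ext_loc _ (fun z => Derive U ((z - x0) / (T - 0)) / (T - 0))).
    + apply is_derive_unique. auto_derive.
      * repeat split; try lra; try (repeat apply Rmult_integral_contrapositive_currified; lra);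
        (change (ex_derive (Derive U) ((x0 + T * y - x0) / (T - 0))); rewrite Ey; apply H2; auto).
      * unfold Rminus, Rdiv in *; change (fun x : R => U x) with U; change (fun x : R => Derive U x) with (Derive U).
        rewrite Ey. field. lra.
    + assert (L2 : locally (x0 + T * y) (fun z => (fun r => -1 < r < 1) ((z - x0) / (T - 0)))).
      { apply (loc_comp (fun z => (z - x0) / (T - 0)) _ (fun r => -1 < r < 1)). auto_derive; auto. apply open_int. rewrite Ey; exact Hy. }
      apply (filter_imp _ _ (fun z H => dx1 0 z HT0 H) L2).
Qed.
End S.
Lemma L_val s : let k := exp s in let y := (k - 1) / (k + 1) in
  -1 < y < 1 /\ ln ((1 + y) / (1 - y)) = s /\ ln ((1 + - y) / (1 - - y)) = - s.
Proof.
  intros k y. assert (Hk : 0 < k) by apply exp_pos.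
  assert (E1 : (1 + y) / (1 - y) = k) by (unfold y; field; lra).
  assert (E2 : (1 + - y) / (1 - - y) = / k) by (unfold y; field; lra).
  split; [|split].
  - unfold y. split.
    + apply (Rmult_lt_reg_r (k + 1)). lra. unfold Rdiv. rewrite Rmult_assoc, Rinv_l; lra.
    + apply (Rmult_lt_reg_r (k + 1)). lra. unfold Rdiv. rewrite Rmult_assoc, Rinv_l; lra.
  - rewrite E1. unfold k. apply ln_exp.
  - rewrite E2, ln_Rinv by exact Hk. unfold k. rewrite ln_exp. reflexivity.
Qed.

Lemma pos_aux C : exists s, 0 < s /\
  0 < (exp s - 1) / (exp s + 1) / 2 + (((exp s - 1) / (exp s + 1)) * ((exp s - 1) / (exp s + 1)) - 1) * (s / 4 + C).
Proof.
  exists (4 + 8 * (Rabs C + 1)). set (s := 4 + 8 * (Rabs C + 1)).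
  assert (Hs : 8 <= s) by (unfold s; pose proof (Rabs_pos C); lra).
  split. lra.
  set (k := exp s).
  assert (Hk : 1 + s + s * s / 4 < k).
  { unfold k. assert (exp s = exp (s / 2) * exp (s / 2)) by (rewrite <- exp_plus; f_equal; field). rewrite H.
    assert (1 + s / 2 < exp (s / 2)) by (apply exp_ineq1; lra). nra. }
  pose proof (Rle_abs C). pose proof (Rle_abs (- C)). rewrite Rabs_Ropp in *.
  assert (Hs2 : s * s / 4 - s >= 8 * Rabs C) by (unfold s at 1 2 3; nra).
  assert (H1 : k - 2 * s - 8 * C > 1) by lra.
  assert (Hk1 : k > 1) by nra.
  replace ((k - 1) / (k + 1) / 2 + ((k - 1) / (k + 1) * ((k - 1) / (k + 1)) - 1) * (s / 4 + C))
    with ((k * (k - 2 * s - 8 * C) - 1) / (2 * ((k + 1) * (k + 1)))) by (field; lra).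
  apply Rdiv_lt_0_compat. nra. nra.
Qed.

Definition I1 (y : R) := -1 < y < 1.

Lemma open_I1 : open I1.
Proof. apply open_and. apply open_gt. apply open_lt. Qed.

Lemma cpt_of_derive f x : ex_derive f x -> continuity_pt f x.
Proof. intros H. apply continuity_pt_filterlim. exact (ex_derive_continuous f x H). Qed.

Lemma I1_between a b c : I1 a -> I1 b -> Rmin a b <= c <= Rmax a b -> I1 c.
Proof.
  unfold I1. intros Ha Hb Hc. destruct (Rle_dec a b).
  - rewrite Rmin_left, Rmax_right in Hc by lra. lra.
  - rewrite Rmin_right, Rmax_left in Hc by lra. lra.
Qed.

Lemma const_of_deriv0 (F : R -> R) y1 y : (forall z, I1 z -> is_derive F z 0) -> I1 y1 -> I1 y -> F y = F y1.
Proof.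
  intros HF H1 H2.
  destruct (MVT_gen F y1 y (fun _ => 0)) as [c [Hc Heq]].
  - intros z Hz. apply HF. apply (I1_between y1 y); auto; lra.
  - intros z Hz. apply cpt_of_derive. eexists. apply HF. apply (I1_between y1 y); auto.
  - lra.
Qed.

Lemma ode_zero (E a : R -> R) y1 : (forall y, I1 y -> is_derive E y (a y * E y)) ->
  (forall y, I1 y -> continuous a y) -> I1 y1 -> E y1 = 0 -> forall y, I1 y -> E y = 0.
Proof.
  intros HE Ha H1 H0.
  set (A := fun y => RInt a y1 y).
  assert (HA : forall z, I1 z -> is_derive A z (a z)).
  { intros z Hz. apply (is_derive_RInt a A y1 z).
    - apply (filter_imp I1). intros b Hb. apply (RInt_correct a y1 b).
      apply ex_RInt_continuous. intros w Hw. apply Ha. apply (I1_between y1 b); auto.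
      apply open_I1; auto.
    - apply Ha; auto. }
  assert (HF : forall z, I1 z -> is_derive (fun y => E y * exp (- A y)) z 0).
  { intros z Hz. 
    assert (D1 := HE z Hz). assert (D2 := HA z Hz).
    apply (is_derive_ext (fun y => E y * exp (- A y))). reflexivity.
    replace 0 with (a z * E z * exp (- A z) + E z * (- a z * exp (- A z))) by ring.
    apply (is_derive_mult E (fun y => exp (- A y))); auto.
    2: intros; apply Rmult_comm.
    apply (is_derive_comp exp (fun y => - A y) z (exp (- A z)) (- a z)).
    apply is_derive_Reals. apply derivable_pt_lim_exp.
    apply (is_derive_opp A z (a z)). exact D2. }
  intros y Hy.
  assert (Hc := const_of_deriv0 _ y1 y HF H1 Hy). simpl in Hc. rewrite H0, Rmult_0_l in Hc.
  apply Rmult_integral in Hc. destruct Hc as [Hc | Hc]; auto.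
  pose proof (exp_pos (- A y)). lra.
Qed.

Lemma eq_of_small a b : (forall eps, 0 < eps -> Rabs (a - b) < eps) -> a = b.
Proof.
  intros H. destruct (Req_dec a b); auto.
  assert (0 < Rabs (a - b)) by (apply Rabs_pos_lt; lra).
  specialize (H _ H1). lra.
Qed.

Lemma exists_nonzero U : smooth_closed U (-1) 1 -> nonconstant_on U (-1) 1 ->
  (forall z, I1 z -> ex_derive U z) -> exists y1, I1 y1 /\ Derive U y1 <> 0.
Proof.
  intros [Hc _] [y1 [y2 [Hy1 [Hy2 Hne]]]] HD.
  apply NNPP. intros Hno.
  assert (Z : forall z, I1 z -> Derive U z = 0).
  { intros z Hz. apply NNPP. intros Hz'. apply Hno. exists z. auto. }
  assert (K : forall z, I1 z -> U z = U 0).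
  { intros z Hz. apply (const_of_deriv0 U 0 z); auto.
    - intros w Hw. rewrite <- (Z w Hw). apply Derive_correct. apply HD; auto.
    - unfold I1; lra. }
  assert (K2 : forall y, -1 <= y <= 1 -> U y = U 0).
  { intros y Hy. symmetry. apply eq_of_small. intros eps Heps.
    specialize (Hc y Hy). 
    assert (Hl : locally (U y) (fun r => Rabs (r - U y) < eps)).
    { exists (mkposreal eps Heps). intros r Hr. exact Hr. }
    specialize (Hc _ Hl). destruct Hc as [d Hd].
    set (m := Rmin d 1).
    assert (Hm : 0 < m <= 1 /\ m <= d) by (unfold m; split; [split; [apply Rmin_pos; [apply cond_pos | lra] | apply Rmin_r] | apply Rmin_l]).
    set (z := y * (1 - m / 2)).
    assert (Hz : I1 z).
    { unfold I1, z. assert (Rabs (y * (1 - m / 2)) < 1).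
      { rewrite Rabs_mult, (Rabs_pos_eq (1 - m / 2)) by lra.
        apply Rle_lt_trans with (1 * (1 - m / 2)). apply Rmult_le_compat_r. lra. apply Rabs_le. lra. lra. }
      apply Rabs_def2 in H. lra. }
    assert (Hb : Rabs (z - y) < d).
    { unfold z. replace (y * (1 - m / 2) - y) with (- (y * (m / 2))) by ring. rewrite Rabs_Ropp, Rabs_mult.
      rewrite (Rabs_pos_eq (m / 2)) by lra. 
      apply Rle_lt_trans with (1 * (m / 2)). apply Rmult_le_compat_r. lra. apply Rabs_le. lra.
      pose proof (cond_pos d). lra. }
    specialize (Hd z Hb). unfold I1 in Hz. assert (Hz' : -1 <= z <= 1) by lra.
    specialize (Hd Hz'). simpl in Hd. rewrite (K z Hz) in Hd. exact Hd. }
  apply Hne. rewrite (K2 y1 Hy1), (K2 y2 Hy2). reflexivity.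
Qed.


Lemma I1_facts y : I1 y -> 0 < (1 + y) / (1 - y) /\ 1 - y <> 0 /\ 1 + y <> 0 /\ y ^ 2 - 1 <> 0.
Proof.
  unfold I1; intros H. split; [apply Rdiv_lt_0_compat; lra|]. split; [lra|]. split; [lra|].
  assert (y ^ 2 < 1) by nra. lra.
Qed.

Lemma noA (V : R -> R) : (forall y, I1 y -> ex_derive V y) ->
  (forall y, I1 y -> (y ^ 2 - 1) * Derive V y + 2 * y * V y = y ^ 2 * (V y) ^ 2) ->
  forall y1, I1 y1 -> V y1 <> 0 -> False.
Proof.
  intros HV Hode y1 Hy1 Hv1.
  set (L := fun y => ln ((1 + y) / (1 - y))).
  set (C := (/ V y1 - y1 / 2) / (y1 ^ 2 - 1) - L y1 / 4).
  set (h := fun y => y / 2 + (y ^ 2 - 1) * (L y / 4 + C)).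
  set (E := fun y => 1 - V y * h y).
  set (a := fun y => y ^ 2 * V y / (y ^ 2 - 1)).
  assert (Hh : forall y, I1 y -> ex_derive h y).
  { intros y Hy. destruct (I1_facts y Hy) as [F1 [F2 [F3 F4]]]. unfold h, L. auto_derive. repeat split; auto. }
  assert (HE0 : forall y, I1 y -> E y = 0).
  { apply (ode_zero E a y1); auto.
    - intros y Hy. destruct (I1_facts y Hy) as [F1 [F2 [F3 F4]]].
      assert (HD : Derive V y = (y ^ 2 * V y ^ 2 - 2 * y * V y) / (y ^ 2 - 1)).
      { rewrite <- (Hode y Hy). field. auto. }
      unfold E, h, L. auto_derive.
      + repeat split; auto.
      + change (fun x : R => V x) with V. rewrite HD. unfold a, E, h, L. unfold Rminus, Rdiv in *. field. repeat split; auto.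
    - intros y Hy. destruct (I1_facts y Hy) as [F1 [F2 [F3 F4]]].
      apply (ex_derive_continuous a y). unfold a. auto_derive. repeat split; auto.
    - unfold E, h, C. destruct (I1_facts y1 Hy1) as [F1 [F2 [F3 F4]]]. field. auto. }
  destruct (pos_aux C) as [s2 [Hs2 P2]].
  destruct (pos_aux (- C)) as [s3 [Hs3 P3]].
  destruct (L_val s2) as [I2 [L2 _]]. destruct (L_val s3) as [I3 [_ L3]].
  set (y2 := (exp s2 - 1) / (exp s2 + 1)) in *.
  set (y3 := (exp s3 - 1) / (exp s3 + 1)) in *.
  assert (Hy2 : 0 < y2).
  { unfold y2. pose proof (exp_ineq1 s2 ltac:(lra)). apply Rdiv_lt_0_compat; lra. }
  assert (Hy3 : 0 < y3).
  { unfold y3. pose proof (exp_ineq1 s3 ltac:(lra)). apply Rdiv_lt_0_compat; lra. }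
  assert (hb : 0 < h y2).
  { unfold h, L. rewrite L2. replace (y2 ^ 2) with (y2 * y2) by ring. exact P2. }
  assert (ha : h (- y3) < 0).
  { unfold h, L. replace (1 + - y3) with (1 + - y3) by ring. rewrite L3.
    replace ((- y3) ^ 2) with (y3 * y3) by ring. lra. }
  destruct (Ranalysis5.IVT_interv h (- y3) y2) as [z [Hz Hz0]].
  - intros w Hw. apply cpt_of_derive. apply Hh. unfold I1 in *. lra.
  - lra.
  - exact ha.
  - exact hb.
  - assert (Iz : I1 z) by (unfold I1 in *; lra).
    specialize (HE0 z Iz). unfold E in HE0. rewrite Hz0 in HE0. lra.
Qed.

Lemma noB (V : R -> R) : (forall y, I1 y -> ex_derive V y) ->
  (forall y, I1 y -> (y ^ 2 - 1) * Derive V y + 2 * y * V y = (y ^ 2 - 1) * (V y) ^ 2) ->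
  forall y1, I1 y1 -> V y1 <> 0 -> False.
Proof.
  intros HV Hode y1 Hy1 Hv1.
  set (L := fun y => ln ((1 + y) / (1 - y))).
  set (C := / (V y1 * (y1 ^ 2 - 1)) - L y1 / 2).
  set (h := fun y => (y ^ 2 - 1) * (L y / 2 + C)).
  set (E := fun y => 1 - V y * h y).
  assert (HE0 : forall y, I1 y -> E y = 0).
  { apply (ode_zero E V y1); auto.
    - intros y Hy. destruct (I1_facts y Hy) as [F1 [F2 [F3 F4]]].
      assert (HD : Derive V y = ((y ^ 2 - 1) * V y ^ 2 - 2 * y * V y) / (y ^ 2 - 1)).
      { rewrite <- (Hode y Hy). field. auto. }
      unfold E, h, L. auto_derive.
      + repeat split; auto.
      + change (fun x : R => V x) with V. rewrite HD. unfold E, h, L. unfold Rminus, Rdiv in *. field. repeat split; auto.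
    - intros y Hy. apply (ex_derive_continuous V y). auto.
    - unfold E, h, C. destruct (I1_facts y1 Hy1) as [F1 [F2 [F3 F4]]]. field. auto. }
  destruct (L_val (-2 * C)) as [Is [Ls _]].
  set (ys := (exp (-2 * C) - 1) / (exp (-2 * C) + 1)) in *.
  specialize (HE0 ys Is). unfold E, h, L in HE0. rewrite Ls in HE0.
  replace (-2 * C / 2 + C) with 0 in HE0 by field. lra.
Qed.


Lemma cone0 T x0 y : 0 < T -> I1 y -> cone_open T x0 0 (x0 + T * y).
Proof.
  intros HT Hy. unfold I1 in Hy. split. lra.
  replace (x0 + T * y - x0) with (T * y) by ring. rewrite Rabs_mult, (Rabs_pos_eq T) by lra.
  assert (Rabs y < 1) by (apply Rabs_def1; lra).
  replace (T - 0) with (T * 1) by ring. apply Rmult_lt_compat_l; lra.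
Qed.

Lemma part1A T x0 : 0 < T ->
  ~ (exists U : R -> R, smooth_closed U (-1) 1 /\ nonconstant_on U (-1) 1 /\
       solves_A (selfsim U T x0) (cone_open T x0)).
Proof.
  intros HT [U [Hs [Hn Hsol]]].
  pose proof Hs as [Hc Hd].
  assert (H1 : forall z, I1 z -> ex_derive U z) by (intros z Hz; exact (proj1 (Hd 1%nat) z Hz)).
  assert (H2 : forall z, I1 z -> ex_derive (Derive U) z) by (intros z Hz; exact (proj1 (Hd 2%nat) z Hz)).
  destruct (exists_nonzero U Hs Hn H1) as [y1 [Hy1 Hv]].
  apply (noA (Derive U) H2) with y1; auto.
  intros y Hy. destruct (derivs U T x0 HT H1 H2 y Hy) as [D1 [D2 [D3 D4]]].
  specialize (Hsol 0 (x0 + T * y) (cone0 T x0 y HT Hy)).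
  rewrite D1, D3, D4 in Hsol.
  transitivity (T ^ 2 * ((Derive (Derive U) y * y ^ 2 + 2 * y * Derive U y) / T ^ 2 - Derive (Derive U) y / T ^ 2)).
  field; lra. rewrite Hsol. field. lra.
Qed.

Lemma part1B T x0 : 0 < T ->
  ~ (exists U : R -> R, smooth_closed U (-1) 1 /\ nonconstant_on U (-1) 1 /\
       solves_B (selfsim U T x0) (cone_open T x0)).
Proof.
  intros HT [U [Hs [Hn Hsol]]].
  pose proof Hs as [Hc Hd].
  assert (H1 : forall z, I1 z -> ex_derive U z) by (intros z Hz; exact (proj1 (Hd 1%nat) z Hz)).
  assert (H2 : forall z, I1 z -> ex_derive (Derive U) z) by (intros z Hz; exact (proj1 (Hd 2%nat) z Hz)).
  destruct (exists_nonzero U Hs Hn H1) as [y1 [Hy1 Hv]].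
  apply (noB (Derive U) H2) with y1; auto.
  intros y Hy. destruct (derivs U T x0 HT H1 H2 y Hy) as [D1 [D2 [D3 D4]]].
  specialize (Hsol 0 (x0 + T * y) (cone0 T x0 y HT Hy)).
  rewrite D1, D2, D3, D4 in Hsol.
  transitivity (T ^ 2 * ((Derive (Derive U) y * y ^ 2 + 2 * y * Derive U y) / T ^ 2 - Derive (Derive U) y / T ^ 2)).
  field; lra. rewrite Hsol. field. lra.
Qed.

Theorem theorem1p1 :
  (forall T x0 : R, 0 < T ->
     ~ (exists U : R -> R, smooth_closed U (-1) 1 /\ nonconstant_on U (-1) 1 /\
          solves_A (selfsim U T x0) (cone_open T x0))) /\
  (forall T x0 : R, 0 < T ->
     ~ (exists U : R -> R, smooth_closed U (-1) 1 /\ nonconstant_on U (-1) 1 /\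
          solves_B (selfsim U T x0) (cone_open T x0))) /\
  (forall (b : betaA) (alpha kappa T x0 : R), 0 < alpha <= 1 -> 0 < T ->
     (forall t x, cone T x0 t x -> 0 < argA b alpha ((x - x0) / (T - t))) /\
     smooth_on (uA b alpha kappa T x0) (cone T x0) /\
     solves_A (uA b alpha kappa T x0) (cone T x0) /\
     blows_up_at (uA b alpha kappa T x0) T x0) /\
  (forall (alpha : nat) (beta kappa T x0 : R), (1 <= alpha)%nat -> 0 < beta -> 0 < T ->
     (forall t x, cone T x0 t x -> 0 < argB alpha beta ((x - x0) / (T - t))) /\
     smooth_on (uB alpha beta kappa T x0) (cone T x0) /\
     solves_B (uB alpha beta kappa T x0) (cone T x0) /\
     blows_up_at (uB alpha beta kappa T x0) T x0).
Proof.
  split; [exact part1A|]. split; [exact part1B|]. split.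
  - intros; apply partA; auto.
  - intros; apply partB; auto.
Qed.
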